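(* The homology class $[u_{\mathrm{edge}}(\bar e)]\in H_1(\Sigma;\mathbb Z)$ is divisible by $3$.
   Context: Setup: $D\subset\mathbb R^3$ regular dodecahedron centered at $0$, $\mathcal I\subset\mathrm{SO}(3)$ its rotation group, $\iota=-\mathrm{id}$. $\mathcal K$ = the five inscribed cubes; $V_o:=\mathbb Z^{\mathcal K}/\mathbb Z(\sum_{e\in\mathcal K}e)$, $\bar e$ the image of $e$. $\hat\Sigma$: surface $D$ with an $\mathcal I$- and $\iota$-invariant small open equilateral triangle removed around each vertex; $\Sigma$: $\hat\Sigma$ with boundary points $p\sim\iota p$ identified (closed oriented genus-10 surface). For an oriented edge $y$ of $D$ with initial point $in(y)$, $\delta_y$ is the loop in $\Sigma$ formed by the edge-type cell $y$ and the cell $\iota y$. For fixed $e\in\mathcal K$, $E$ is one of the two 4-element sets of pairwise non-adjacent (in the cube) vertices of $e$. $u_{\mathrm{edge}}:V_o\to Z_1(\Sigma)$ is the $\mathbb Z\mathcal I$-homomorphism with $u_{\mathrm{edge}}(\bar e)=\sum_{x\in E}\sum_{y:\,in(y)=x}\delta_y$. *)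

(* Defs.v *)
From HB Require Import structures.
From mathcomp Require Import all_boot all_order all_algebra.
Set Implicit Arguments.
Unset Strict Implicit.
Unset Printing Implicit Defensive.
Import GRing.Theory Num.Theory.
Local Open Scope ring_scope.

(* (a, b) represents a + b * phi, with phi^2 = phi + 1.  Since 1 and phi are
   linearly independent over Q, equality of pairs is equality of reals. *)
Definition Zphi := (int * int)%type.
Definition zadd (a b : Zphi) : Zphi := (a.1 + b.1, a.2 + b.2).
Definition zopp (a : Zphi) : Zphi := (- a.1, - a.2).
Definition zsub (a b : Zphi) : Zphi := zadd a (zopp b).
Definition zmul (a b : Zphi) : Zphi :=
  (a.1 * b.1 + a.2 * b.2, a.1 * b.2 + a.2 * b.1 + a.2 * b.2).
(* a + b*phi > 0  <=>  (2a+b) + b*sqrt 5 > 0 *)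
Definition zpos (a : Zphi) : bool :=
  let c := 2 * a.1 + a.2 in let b := a.2 in
  if (0 <= c) && (0 <= b) then (c != 0) || (b != 0)
  else if (c < 0) && (b <= 0) then false
  else if 0 <= c then 5 * b * b < c * c
  else c * c < 5 * b * b.

Definition z0 : Zphi := (0, 0).
Definition z1 : Zphi := (1, 0).
Definition zm1 : Zphi := (-1, 0).
Definition zphi : Zphi := (0, 1).
Definition zmphi : Zphi := (0, -1).
Definition ziphi : Zphi := (-1, 1).   (* 1/phi = phi - 1 *)
Definition zmiphi : Zphi := (1, -1).

Definition P3 := (Zphi * Zphi * Zphi)%type.
Definition pt (a b c : Zphi) : P3 := (a, b, c).
Definition pX (p : P3) := p.1.1.
Definition pY (p : P3) := p.1.2.
Definition pZ (p : P3) := p.2.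
Definition psub (p q : P3) : P3 :=
  pt (zsub (pX p) (pX q)) (zsub (pY p) (pY q)) (zsub (pZ p) (pZ q)).
Definition pneg (p : P3) : P3 := pt (zopp (pX p)) (zopp (pY p)) (zopp (pZ p)).
Definition dot (p q : P3) : Zphi :=
  zadd (zadd (zmul (pX p) (pX q)) (zmul (pY p) (pY q))) (zmul (pZ p) (pZ q)).
Definition cross (p q : P3) : P3 :=
  pt (zsub (zmul (pY p) (pZ q)) (zmul (pZ p) (pY q)))
     (zsub (zmul (pZ p) (pX q)) (zmul (pX p) (pZ q)))
     (zsub (zmul (pX p) (pY q)) (zmul (pY p) (pX q))).
Definition sqdist (p q : P3) : Zphi := dot (psub p q) (psub p q).

Inductive axis := Ax0 | Ax1 | Ax2.
Definition axis_to_nat (a : axis) : nat :=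
  match a with Ax0 => 0 | Ax1 => 1 | Ax2 => 2 end%N.
Definition nat_to_axis (n : nat) : option axis :=
  match n with 0 => Some Ax0 | 1 => Some Ax1 | 2 => Some Ax2 | _ => None end%N.
Lemma axis_to_natK : pcancel axis_to_nat nat_to_axis. Proof. by case. Qed.
HB.instance Definition _ := Countable.copy axis (pcan_type axis_to_natK).
Lemma axis_enumP : Finite.axiom [:: Ax0; Ax1; Ax2]. Proof. by case. Qed.
HB.instance Definition _ := isFinite.Build axis axis_enumP.

Definition shift (k : axis) (p : P3) : P3 :=
  match k with
  | Ax0 => p
  | Ax1 => pt (pY p) (pZ p) (pX p)
  | Ax2 => pt (pZ p) (pX p) (pY p)
  end.
Definition sgn (b : bool) (a : Zphi) : Zphi := if b then a else zopp a.

(* Standard coordinates: the 8 points (+-1,+-1,+-1) and the 12 points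
   (0,+-1/phi,+-phi), (+-1/phi,+-phi,0), (+-phi,0,+-1/phi). *)
Definition V := ((bool * bool * bool) + (bool * bool * axis))%type.
Definition coords (v : V) : P3 :=
  match v with
  | inl (a, b, c) => pt (sgn a z1) (sgn b z1) (sgn c z1)
  | inr (a, b, k) => shift k (pt z0 (sgn a ziphi) (sgn b zphi))
  end.

(* edges of D: squared edge length (2/phi)^2 = 8 - 4 phi *)
Definition adj (x y : V) : bool := sqdist (coords x) (coords y) == (8, -4).

Definition anti (x : V) : V :=
  match x with
  | inl (a, b, c) => inl (~~ a, ~~ b, ~~ c)
  | inr (a, b, k) => inr (~~ a, ~~ b, k)
  end.
Lemma coords_anti x : coords (anti x) = pneg (coords x).
Proof.
by case: x => [[[a b] c]|[[a b] k]]; [case: a; case: b; case: c | case: a; case: b; case: k].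
Qed.

(* exactly one of x, anti x is "canonical" *)
Definition canon (x : V) : bool :=
  match x with inl (a, _, _) => a | inr (a, _, _) => a end.
(* an injective numbering of the vertices, used only to fix orientations *)
Definition vcode (x : V) : nat :=
  match x with
  | inl (a, b, c) => (4 * a + 2 * b + c)%N
  | inr (a, b, k) => (8 + 4 * axis_to_nat k + 2 * a + b)%N
  end.

(* faces of D: the vertices on the supporting plane  <n, v> = 1 + phi  for
   the 12 outward face normals n = shift k (0, +-phi, +-1) *)
Definition F := (bool * bool * axis)%type.
Definition normal (f : F) : P3 :=
  let: (a, b, k) := f in shift k (pt z0 (sgn a zphi) (sgn b z1)).
Definition on_face (f : F) (v : V) : bool := dot (normal f) (coords v) == (1, 1).
(* the oriented edge x -> z of face f runs counterclockwise seen from outside *)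
Definition ccw (f : F) (x z : V) : bool :=
  zpos (dot (cross (coords x) (coords z)) (normal f)).

(* For an oriented edge (x,z) of D, q(x,z) is the corner of the small triangle
   around x lying on the edge xz.  In Sigma, q(x,z) ~ q(iota x, iota z).
   0-cells : the classes of the q(x,z); representative (x,z) with canon x.
   1-cells : edge-type cells {x,z} (oriented from q(x,z) to q(z,x), stored
             as (x,z) with vcode x < vcode z), and arc cells: the boundary arc
             of the triangle around x from q(x,a) to q(x,b) (stored as
             (x,a,b) with vcode a < vcode b and canon x; the arc around
             iota x is identified with it via iota).
   2-cells : the 12 truncated faces (decagons).
   Chains are integer functions on the ambient index types V*V, (V*V)+(V*V*V),
   F; a chain of Sigma is one supported on genuine cells (the predicates
   pcell_p, cell1_p).  All maps below produce such chains. *)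
Definition pcell_p : pred (V * V) := fun p => adj p.1 p.2 && canon p.1.
Definition ecell_p : pred (V * V) := fun p => adj p.1 p.2 && (vcode p.1 < vcode p.2)%N.
Definition acell_p : pred (V * V * V) := fun t =>
  [&& adj t.1.1 t.1.2, adj t.1.1 t.2, (vcode t.1.2 < vcode t.2)%N & canon t.1.1].
Definition Cell1 := ((V * V) + (V * V * V))%type.
Definition cell1_p : pred Cell1 := fun c =>
  match c with inl e => ecell_p e | inr t => acell_p t end.

Definition C0 := {ffun (V * V) -> int}.
Definition C1 := {ffun Cell1 -> int}.
Definition C2 := {ffun F -> int}.

Definition ind (b : bool) : int := (nat_of_bool b)%:Z.

Definition gen0 (x z : V) : C0 :=
  let p := if canon x then (x, z) else (anti x, anti z) in
  [ffun c : V * V => ind (c == p)].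

Definition gen1E (x z : V) : C1 :=
  if (vcode x < vcode z)%N then [ffun c : Cell1 => ind (c == inl (x, z))]
  else - [ffun c : Cell1 => ind (c == inl (z, x))].

Definition gen1A (x a b : V) : C1 :=
  let t := if canon x then (x, a, b) else (anti x, anti a, anti b) in
  if (vcode t.1.2 < vcode t.2)%N then [ffun c : Cell1 => ind (c == inr t)]
  else - [ffun c : Cell1 => ind (c == inr (t.1.1, t.2, t.1.2))].

Definition bd1 (c : Cell1) : C0 :=
  match c with
  | inl e => gen0 e.2 e.1 - gen0 e.1 e.2
  | inr t => gen0 t.1.1 t.2 - gen0 t.1.1 t.1.2
  end.

Definition boundary1 (ch : C1) : C0 := \sum_(c : Cell1 | cell1_p c) bd1 c *~ ch c.

(* boundary of the decagon f, traversed counterclockwise: the edge cell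
   x -> z, then the arc around z from q(z,x) to q(z,w), w the next vertex *)
Definition bd2 (f : F) : C1 :=
  \sum_(xz : V * V | [&& on_face f xz.1, on_face f xz.2, adj xz.1 xz.2 & ccw f xz.1 xz.2])
     (gen1E xz.1 xz.2 +
      \sum_(w : V | [&& on_face f w, adj xz.2 w & w != xz.1]) gen1A xz.2 xz.1 w).

Definition boundary2 (b : C2) : C1 := \sum_(f : F) bd2 f *~ b f.

Definition delta (x z : V) : C1 := gen1E x z - gen1E (anti x) (anti z).

Definition u_edge (E : {set V}) : C1 :=
  \sum_(x in E) \sum_(z : V | adj x z) delta x z.

(* The standard cube {0,1}^3 = bool*bool*bool; two of its vertices are
   adjacent iff their Hamming distance is 1. *)
Definition hamming (a b : bool * bool * bool) : nat :=
  ((a.1.1 != b.1.1) + (a.1.2 != b.1.2) + (a.2 != b.2))%N.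

(* Main.v *)
Require Import Defs.
From mathcomp Require Import all_boot all_order all_algebra.
Import GRing.Theory.
Local Open Scope ring_scope.

Definition tets : seq (seq V * seq int) := [::
  ([:: inl (true,true,true); inl (true,false,false); inl (false,true,false); inl (false,false,true)], [:: 2; 1; 0; 2; 1; 0; 2; 1; 0; 2; 1; 0]);
  ([:: inl (true,true,true); inr (true,false,Ax0); inr (true,false,Ax1); inr (true,false,Ax2)], [:: 2; 1; 0; 1; 0; 2; 1; 0; 2; 2; 1; 0]);
  ([:: inl (true,true,false); inl (true,false,true); inl (false,true,true); inl (false,false,false)], [:: 1; 2; 0; 1; 2; 0; 1; 2; 0; 1; 2; 0]);
  ([:: inl (true,true,false); inr (true,true,Ax0); inr (true,false,Ax1); inr (false,false,Ax2)], [:: 1; 1; 0; 0; 2; 2; 0; 2; 2; 1; 1; 0]);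
  ([:: inl (true,false,true); inr (true,true,Ax1); inr (true,false,Ax2); inr (false,false,Ax0)], [:: 2; 0; 0; 1; 2; 1; 1; 2; 1; 2; 0; 0]);
  ([:: inl (true,false,false); inr (true,true,Ax1); inr (false,true,Ax0); inr (false,false,Ax2)], [:: 0; 1; 0; 2; 2; 1; 2; 2; 1; 0; 1; 0]);
  ([:: inl (false,true,true); inr (true,true,Ax2); inr (true,false,Ax0); inr (false,false,Ax1)], [:: 0; 2; 0; 1; 1; 2; 1; 1; 2; 0; 2; 0]);
  ([:: inl (false,true,false); inr (true,true,Ax0); inr (false,true,Ax2); inr (false,false,Ax1)], [:: 1; 0; 0; 2; 1; 2; 2; 1; 2; 1; 0; 0]);
  ([:: inl (false,false,true); inr (true,true,Ax2); inr (false,true,Ax1); inr (false,false,Ax0)], [:: 2; 2; 0; 0; 1; 1; 0; 1; 1; 2; 2; 0]);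
  ([:: inl (false,false,false); inr (false,true,Ax0); inr (false,true,Ax1); inr (false,true,Ax2)], [:: 1; 2; 0; 2; 0; 1; 2; 0; 1; 1; 2; 0])].
Definition allV : seq V := [:: inl (true,true,true); inl (true,true,false); inl (true,false,true); inl (true,false,false); inl (false,true,true); inl (false,true,false); inl (false,false,true); inl (false,false,false); inr (true,true,Ax0); inr (true,true,Ax1); inr (true,true,Ax2); inr (true,false,Ax0); inr (true,false,Ax1); inr (true,false,Ax2); inr (false,true,Ax0); inr (false,true,Ax1); inr (false,true,Ax2); inr (false,false,Ax0); inr (false,false,Ax1); inr (false,false,Ax2)].
Definition allF : seq F := [:: (true,true,Ax0); (true,true,Ax1); (true,true,Ax2); (true,false,Ax0); (true,false,Ax1); (true,false,Ax2); (false,true,Ax0); (false,true,Ax1); (false,true,Ax2); (false,false,Ax0); (false,false,Ax1); (false,false,Ax2)].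

Lemma allV_mem v : v \in allV.
Proof. by case: v => [[[[] []] []]|[[[] []] []]]. Qed.
Lemma allF_mem f : f \in allF.
Proof. by case: f => [[[] []] []]. Qed.

Lemma perm_V : perm_eq (index_enum V) allV.
Proof.
apply: uniq_perm; first exact: index_enum_uniq; first by vm_compute.
by move=> v; rewrite mem_index_enum allV_mem.
Qed.
Lemma perm_F : perm_eq (index_enum F) allF.
Proof.
apply: uniq_perm; first exact: index_enum_uniq; first by vm_compute.
by move=> v; rewrite mem_index_enum allF_mem.
Qed.
Definition allVV : seq (V * V) := [seq (x, y) | x <- allV, y <- allV].
Lemma perm_VV : perm_eq (index_enum (V * V)%type) allVV.
Proof.
apply: uniq_perm; first exact: index_enum_uniq; first by vm_compute.
by move=> [x y]; rewrite mem_index_enum; symmetry; apply: (allpairs_f pair); apply: allV_mem.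
Qed.

Section Chains.
Variable T : finType.
Implicit Types s t : seq (T * int).
Definition cnt s (c : T) : int :=
  foldr (fun p acc => (if p.1 == c then p.2 else 0) + acc) 0 s.
Definition evf s : {ffun T -> int} := [ffun c => cnt s c].
Definition scl (k : int) s := [seq (p.1, p.2 * k) | p <- s].

Lemma cnt_cat s t c : cnt (s ++ t) c = cnt s c + cnt t c.
Proof. elim: s => [|p s IH]; first by rewrite /= add0r. by rewrite /= -/(cnt (s ++ t) c) IH addrA. Qed.
Lemma evf_cat s t : evf (s ++ t) = evf s + evf t.
Proof. by apply/ffunP => c; rewrite !ffunE cnt_cat. Qed.
Lemma evf_nil : evf [::] = 0.
Proof. by apply/ffunP => c; rewrite !ffunE. Qed.
Lemma evf_scl k s : evf (scl k s) = evf s *~ k.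
Proof.
apply/ffunP => c; rewrite ffunMzE !ffunE.
elim: s => [|p s IH] /=; first by rewrite mul0rz.
rewrite IH mulrzDl; congr (_ + _); case: (p.1 == c); [exact: (esym (mulrzz _ _)) | exact: (esym (mul0rz _ _))].
Qed.
Lemma evf_sum (I : Type) (r : seq I) (P : pred I) (G : I -> seq (T * int)) :
  \sum_(i <- r | P i) evf (G i) = evf (flatten [seq G i | i <- r & P i]).
Proof.
elim: r => [|i r IH]; first by rewrite big_nil evf_nil.
rewrite big_cons /=; case: ifP => _ //=; by rewrite IH evf_cat.
Qed.
Lemma evf1 (p : T) : [ffun c => ind (c == p)] = evf [:: (p, 1)].
Proof. by apply/ffunP => c; rewrite !ffunE /= addr0 eq_sym; case: eqP. Qed.
Lemma evfm1 (p : T) : - [ffun c => ind (c == p)] = evf [:: (p, -1)].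
Proof. by apply/ffunP => c; rewrite !ffunE /= addr0 eq_sym; case: eqP. Qed.

Lemma cnt_out s c : c \notin map fst s -> cnt s c = 0.
Proof.
elim: s => [|p s IH] //=; rewrite in_cons negb_or => /andP [h1 h2].
by rewrite IH // eq_sym (negbTE h1) addr0.
Qed.
Definition eqch s t := all (fun c => cnt s c == cnt t c) (map fst (s ++ t)).
Lemma eqchP s t : eqch s t -> evf s = evf t.
Proof.
move=> /allP h; apply/ffunP => c; rewrite !ffunE.
case: (boolP (c \in map fst (s ++ t))) => [/h /eqP //|].
rewrite map_cat mem_cat negb_or => /andP [h1 h2].
by rewrite !cnt_out.
Qed.
Lemma cnt_supp (Q : pred T) s c : all (fun p => Q p.1) s -> ~~ Q c -> cnt s c = 0.
Proof.
elim: s => [|p s IH] //= /andP [h1 h2] hc.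
rewrite IH // addr0; case: eqP => // e; by move: hc; rewrite -e h1.
Qed.
Lemma sum_cnt (M : zmodType) (P : pred T) (G : T -> M) s :
  \sum_(c | P c) G c *~ cnt s c = \sum_(p <- s | P p.1) G p.1 *~ p.2.
Proof.
elim: s => [|p s IH]; first by rewrite big_nil big1 // => c _; rewrite mulr0z.
rewrite big_cons /= -IH.
under eq_bigr do rewrite mulrzDr.
rewrite big_split /=.
have -> : \sum_(c | P c) G c *~ (if p.1 == c then p.2 else 0) =
          (if P p.1 then G p.1 *~ p.2 else 0).
  transitivity (\sum_(c | P c) (if c == p.1 then G p.1 *~ p.2 else 0)).
    by apply: eq_bigr => c _; rewrite eq_sym; case: eqP => [->|] //; rewrite mulr0z.
  rewrite -big_mkcondr /=; case: ifP => Pp.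
    rewrite (eq_bigl (fun c => c == p.1)) ?big_pred1_eq // => c.
    by case: eqP => [->|]; rewrite ?Pp ?andbF.
  rewrite big_pred0 // => c; case: eqP => [->|]; by rewrite ?Pp ?andbF.
by case: ifP; rewrite ?add0r.
Qed.
End Chains.
Arguments cnt {T}. Arguments evf {T}. Arguments scl {T}. Arguments eqch {T}.

Definition g0 (x z : V) : seq ((V * V) * int) :=
  [:: ((if canon x then (x, z) else (anti x, anti z)), 1)].
Lemma gen0E x z : gen0 x z = evf (g0 x z).
Proof. exact: evf1. Time Qed.
Definition g1E (x z : V) : seq (Cell1 * int) :=
  if (vcode x < vcode z)%N then [:: (inl (x, z), 1)] else [:: (inl (z, x), -1)].
Lemma gen1EE x z : gen1E x z = evf (g1E x z).
Proof. rewrite /gen1E /g1E; case: ifP => _; [exact: evf1 | exact: evfm1]. Time Qed.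
Definition g1A (x a b : V) : seq (Cell1 * int) :=
  let t := if canon x then (x, a, b) else (anti x, anti a, anti b) in
  if (vcode t.1.2 < vcode t.2)%N then [:: (inr t, 1)]
  else [:: (inr (t.1.1, t.2, t.1.2), -1)].
Lemma gen1AE x a b : gen1A x a b = evf (g1A x a b).
Proof.
rewrite /gen1A /g1A; cbv zeta.
case: (canon x); (case: ifP => _; [exact: evf1 | exact: evfm1]).
Qed.
Definition dl x z := g1E x z ++ scl (-1) (g1E (anti x) (anti z)).
Lemma deltaE x z : delta x z = evf (dl x z).
Proof. by rewrite /delta /dl evf_cat evf_scl !gen1EE mulrN1z. Time Qed.

Definition UL (P : pred V) :=
  flatten [seq flatten [seq dl x z | z <- allV & adj x z] | x <- allV & P x].
Lemma u_edgeE (P : pred V) : u_edge [set v | P v] = evf (UL P).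
Proof.
rewrite /u_edge (eq_bigl P) => [|x]; last by rewrite inE.
rewrite (perm_big _ perm_V) /UL -evf_sum; apply: eq_bigr => x _.
rewrite (perm_big _ perm_V) -evf_sum; apply: eq_bigr => z _; exact: deltaE.
Qed.

Definition bd2L f : seq (Cell1 * int) :=
  flatten [seq g1E xz.1 xz.2 ++
     flatten [seq g1A xz.2 xz.1 w | w <- allV & [&& on_face f w, adj xz.2 w & w != xz.1]]
   | xz <- allVV & [&& on_face f xz.1, on_face f xz.2, adj xz.1 xz.2 & ccw f xz.1 xz.2]].
Lemma bd2E f : bd2 f = evf (bd2L f).
Proof.
rewrite /bd2 (perm_big _ perm_VV) /bd2L -evf_sum; apply: eq_bigr => xz _.
rewrite evf_cat gen1EE; congr (_ + _).
rewrite (perm_big _ perm_V) -evf_sum; apply: eq_bigr => w _; exact: gen1AE.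
Qed.

Definition bf (cs : seq int) (f : F) : int := nth 0 cs (index f allF).
Definition BL cs := flatten [seq scl (bf cs f) (bd2L f) | f <- allF & true].
Lemma boundary2E cs : boundary2 [ffun f => bf cs f] = evf (BL cs).
Proof.
rewrite /boundary2 (perm_big _ perm_F) /BL -evf_sum; apply: eq_bigr => f _.
by rewrite ffunE bd2E evf_scl.
Qed.

Definition bd1L (c : Cell1) : seq ((V * V) * int) :=
  match c with
  | inl e => g0 e.2 e.1 ++ scl (-1) (g0 e.1 e.2)
  | inr t => g0 t.1.1 t.2 ++ scl (-1) (g0 t.1.1 t.1.2)
  end.
Lemma bd1E c : bd1 c = evf (bd1L c).
Proof. by case: c => [e|t]; rewrite /bd1 /bd1L evf_cat evf_scl !gen0E mulrN1z. Time Qed.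
Definition B1L (Z : seq (Cell1 * int)) :=
  flatten [seq scl p.2 (bd1L p.1) | p <- Z & cell1_p p.1].
Lemma boundary1E Z : boundary1 (evf Z) = evf (B1L Z).
Proof.
rewrite /boundary1; under eq_bigr => c _ do rewrite ffunE.
rewrite sum_cnt /B1L -evf_sum; apply: eq_bigr => p _.
by rewrite bd1E evf_scl.
Qed.

Definition nrm (s : seq (Cell1 * int)) := [seq (c, cnt s c) | c <- undup (map fst s)].
Definition div3 (x : int) : int :=
  match x with Posz n => Posz (n %/ 3) | Negz n => - Posz (n.+1 %/ 3) end.
Definition ZL (T : seq V) (cs : seq int) :=
  [seq (p.1, div3 p.2) | p <- nrm (UL (fun v => v \in T) ++ scl (-1) (BL cs))].
Definition good (T : seq V) (cs : seq int) :=
  let Z := ZL T cs in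
  [&& all (fun p => cell1_p p.1) Z, eqch (B1L Z) [::] &
      eqch (UL (fun v => v \in T)) (scl 3 Z ++ BL cs)].
Lemma allgood : all (fun Tc => good Tc.1 Tc.2) tets.
Proof. Time by vm_compute. Time Qed.

Definition D (x y : V) := sqdist (coords x) (coords y).
Definition clsOK :=
  all (fun x => all (fun y => if y == x then true else all (fun z =>
    if [|| z == x, z == y, D x z != D x y | D y z != D x y] then true else
      all (fun w =>
        if [|| w == x, w == y, w == z, D x w != D x y, D y w != D x y | D z w != D x y]
        then true else
          has (fun Tc => all (fun v => (v \in [:: x; y; z; w]) == (v \in Tc.1)) allV) tets)
      allV) allV) allV) allV.
Lemma clsOK_true : clsOK.
Proof. by vm_compute. Qed.

Lemma classify x y z w : y != x -> z != x -> z != y -> w != x -> w != y -> w != z ->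
  D x z = D x y -> D y z = D x y -> D x w = D x y -> D y w = D x y -> D z w = D x y ->
  exists2 Tc, Tc \in tets & forall v, (v \in [:: x; y; z; w]) = (v \in Tc.1).
Proof.
move=> yx zx zy wx wy wz e1 e2 e3 e4 e5.
have h1 := allP clsOK_true x (allV_mem x); cbv beta in h1.
have h2 := allP h1 y (allV_mem y); cbv beta in h2.
rewrite (negbTE yx) in h2.
have h3 := allP h2 z (allV_mem z); cbv beta in h3.
rewrite (negbTE zx) (negbTE zy) e1 e2 eqxx in h3.
have h4 := allP h3 w (allV_mem w); cbv beta in h4.
rewrite (negbTE wx) (negbTE wy) (negbTE wz) e3 e4 e5 eqxx in h4.
case/hasP: h4 => Tc TcIn /allP h.
by exists Tc => // v; apply/eqP; exact: h v (allV_mem v).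
Qed.

Definition cube3 := (bool * bool * bool)%type.
Definition allC : seq cube3 :=
  [:: (true,true,true); (true,true,false); (true,false,true); (true,false,false);
      (false,true,true); (false,true,false); (false,false,true); (false,false,false)].
Lemma allC_mem a : a \in allC.
Proof. by case: a => [[[] []] []]. Qed.
Definition cubeOK :=
  all (fun a => all (fun b => all (fun c => all (fun d =>
    ~~ ((a != b) && (a != c) && (a != d) && (b != c) && (b != d) && (c != d) &&
        (hamming a b != 1%N) && (hamming a c != 1%N) && (hamming a d != 1%N) &&
        (hamming b c != 1%N) && (hamming b d != 1%N) && (hamming c d != 1%N)) ||
    ((hamming a b == 2%N) && (hamming a c == 2%N) && (hamming a d == 2%N) &&
     (hamming b c == 2%N) && (hamming b d == 2%N) && (hamming c d == 2%N)))
  allC) allC) allC) allC.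
Lemma cubeOK_true : cubeOK.
Proof. by vm_compute. Qed.
Lemma cube_lemma (a b c d : cube3) :
  (a != b) && (a != c) && (a != d) && (b != c) && (b != d) && (c != d) &&
  (hamming a b != 1%N) && (hamming a c != 1%N) && (hamming a d != 1%N) &&
  (hamming b c != 1%N) && (hamming b d != 1%N) && (hamming c d != 1%N) ->
  (hamming a b == 2%N) && (hamming a c == 2%N) && (hamming a d == 2%N) &&
  (hamming b c == 2%N) && (hamming b d == 2%N) && (hamming c d == 2%N).
Proof.
move: cubeOK_true => /allP/(_ a (allC_mem a))/allP/(_ b (allC_mem b))
  /allP/(_ c (allC_mem c))/allP/(_ d (allC_mem d)) /= h H.
by move: h; rewrite H.
Qed.

Theorem corollary3p8 (f : bool * bool * bool -> V) (s : Zphi)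
    (E : {set bool * bool * bool}) :
  injective f ->
  (forall a b, sqdist (coords (f a)) (coords (f b)) = zmul s ((hamming a b)%:Z, 0)) ->
  #|E| = 4%N ->
  {in E &, forall a b, a != b -> hamming a b != 1%N} ->
  exists z : C1,
    (forall c, ~~ cell1_p c -> z c = 0) /\ boundary1 z = 0 /\
    exists b : C2, u_edge (f @: E) = z *~ 3 + boundary2 b.
Proof.
move=> finj hdist hE hind.
have [a aE] : exists a, a \in E by apply/set0Pn; rewrite -card_gt0 hE.
have hE1 : #|E :\ a| = 3%N by move: hE; rewrite (cardsD1 a) aE add1n => -[].
have [b bE1] : exists b, b \in E :\ a by apply/set0Pn; rewrite -card_gt0 hE1.
have hE2 : #|E :\ a :\ b| = 2%N by move: hE1; rewrite (cardsD1 b) bE1 add1n => -[].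
have [c cE2] : exists c, c \in E :\ a :\ b by apply/set0Pn; rewrite -card_gt0 hE2.
have hE3 : #|E :\ a :\ b :\ c| = 1%N by move: hE2; rewrite (cardsD1 c) cE2 add1n => -[].
have [d dE3] : exists d, d \in E :\ a :\ b :\ c by apply/set0Pn; rewrite -card_gt0 hE3.
have hE4 : #|E :\ a :\ b :\ c :\ d| = 0%N by move: hE3; rewrite (cardsD1 d) dE3 add1n => -[].
move: (bE1) (cE2) (dE3); rewrite !inE => /andP [ba bE] /and3P [cb ca cE] /and4P [dc db da dE].
have Ecov x : x \in E -> x \in [:: a; b; c; d].
  move=> xE; apply/negPn/negP; rewrite !inE !negb_or => /and4P [xa xb xc xd].
  have : x \in E :\ a :\ b :\ c :\ d by rewrite !inE xa xb xc xd xE.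
  by rewrite (cards0_eq hE4) inE.
have ab : a != b by rewrite eq_sym.
have ac : a != c by rewrite eq_sym.
have ad : a != d by rewrite eq_sym.
have bc : b != c by rewrite eq_sym.
have bd : b != d by rewrite eq_sym.
have cd : c != d by rewrite eq_sym.
have := @cube_lemma a b c d; rewrite ab ac ad bc bd cd !hind //.
move=> /(_ isT) /andP [/andP [/andP [/andP [/andP [/eqP hab /eqP hac] /eqP had] /eqP hbc] /eqP hbd] /eqP hcd].
have dd x y : hamming x y = 2%N -> D (f x) (f y) = zmul s (2%:Z, 0).
  by move=> hxy; rewrite /D hdist hxy.
have [Tc TcIn hT] : exists2 Tc, Tc \in tets &
    forall v, (v \in [:: f a; f b; f c; f d]) = (v \in Tc.1).
  apply: classify; rewrite ?(inj_eq finj) //; by rewrite !dd.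
have Seq : f @: E = [set v | v \in Tc.1].
  apply/setP => v; rewrite inE -hT; apply/imsetP/idP.
    move=> [x /Ecov]; rewrite !inE => /or4P [] /eqP -> ->; by rewrite eqxx ?orbT.
  rewrite !inE => /or4P [] /eqP ->.
  - by exists a.
  - by exists b.
  - by exists c.
  - by exists d.
rewrite Seq (u_edgeE (fun v => v \in Tc.1)).
have := allP allgood _ TcIn; rewrite /good => /and3P [hsup hb1 heq].
exists (evf (ZL Tc.1 Tc.2)); split.
  by move=> c0 hc; rewrite ffunE; exact: (@cnt_supp _ cell1_p _ _ hsup hc).
split; first by rewrite boundary1E (@eqchP _ _ _ hb1) evf_nil.
exists [ffun f0 => bf Tc.2 f0].
by rewrite boundary2E -evf_scl -evf_cat; apply: eqchP.
Qed.
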